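(* Let $O\rhd c_1$ and $O\rhd c_2$ be abstract P-markings. Then $O\rhd c_1\sim_C O\rhd c_2$ if and only if $O\rhd c_1\sim_{AC}O\rhd c_2$.
   Context: Fix a set $Act$ of action labels, an infinite set $\mathcal{E}$ of event names and a net $N=(S,T,F,l)$ (disjoint places $S$ and transitions $T$, $F\subseteq(S\times T)\cup(T\times S)$, $l\colon T\to Act$, ${}^\bullet t=\{s:(s,t)\in F\}$, $t^\bullet=\{s:(t,s)\in F\}$ nonempty). Posets are finite $Act$-labelled posets $O=(X_O,\preccurlyeq_O,l_O)$, $X_O\subseteq\mathcal{E}$; $|O|=\{(x,l_O(x))\}$, $x_a=(x,a)$. Morphisms preserve order and labels; isomorphisms are bijective morphisms with morphism inverses. $\max_O K$: maximal elements; $K$ down-closed if $y\in K$, $x\preccurlyeq_O y\Rightarrow x\in K$. Causal markings: finite sets $c$ of pairs $K\vdash s$ ($s\in S$, $K$ finite $\subseteq\mathcal{E}\times Act$); $\mathcal{K}(c)$ union of cause sets, $|c|$ set of places, $K\vdash m=\{K\vdash s:s\in m\}$, $c\sigma=\{\sigma(K)\vdash s\}$. P-marking $O\rhd c$: cause sets are down-closed subsets of $|O|$. $\delta(O,K,e_a)$: $O$ plus event $e\notin X_O$ labelled $a$ above all of $K$, reflexive-transitively closed. CG$_C$: $O\rhd c\cup c'\xrightarrow{K\vdash e_a}\delta(O,K,e_a)\rhd(\mathcal{K}(c)\cup\{e_a\}\vdash t^\bullet)\cup c'$ whenever $t\in T$, $O\rhd c\cup c'$ a P-marking, $|c|={}^\bullet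 t$, $a=l(t)$, $e\in\mathcal{E}\setminus X_O$, $K=\max_O\mathcal{K}(c)$. Concrete causal bisimulation: family $\{R_O\}$ indexed by posets with: $(O_1\rhd c_1,O_2\rhd c_2)\in R_O\Rightarrow O_1=O_2=O$; if $(O\rhd c_1,O\rhd c_2)\in R_O$ and $O\rhd c_1\xrightarrow{K\vdash e_a}O'\rhd c_1'$ then $O\rhd c_2\xrightarrow{K\vdash e_a}O'\rhd c_2'$ with $(O'\rhd c_1',O'\rhd c_2')\in R_{O'}$, and vice versa; $\sim_C$ greatest. Fix canonical representatives $[O]_\cong$ of isomorphism classes and isomorphisms $\alpha_O\colon O\to[O]_\cong$; $O$ is abstract if $[O]_\cong=O$, and an abstract P-marking has an abstract poset. For abstract $O$: $\delta(O,K,a)=[\delta(O,K,e_a)]_\cong$, $new(O,K,a)$ its added event, $old(O,K,a)\colon O\to\delta(O,K,a)$ the embedding corresponding to the inclusion. CG$_{AC}$: for each CG$_C$ transition $O\rhd c\xrightarrow{K\vdash e_a}\delta(O,K,e_a)\rhd c'$, a transition $[O]_\cong\rhd c\alpha_O\stackrel{\alpha_O(K)\vdash a}{\Longrightarrow}\delta([O]_\cong,\alpha_O(K),a)\rhd c''$, $c''$ being $c'$ renamed by $x\mapsto old([O]_\cong,\alpha_O(K),a)(\alpha_O(x))$ ($x\in X_O$), $e_a\mapsto new([O]_\cong,\alpha_O(K),a)$. Abstract causal bisimulation: family $\{R_O\}$ indexed by abstract posets of relations on abstract P-markings with: $(O_1\rhd c_1,O_2\rhd c_2)\in R_O\Rightarrow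 O_1=O_2=O$; if $(O\rhd c_1,O\rhd c_2)\in R_O$ and $O\rhd c_1\stackrel{K\vdash a}{\Longrightarrow}O'\rhd c_1'$ then $O\rhd c_2\stackrel{K\vdash a}{\Longrightarrow}O'\rhd c_2'$ with $(O'\rhd c_1',O'\rhd c_2')\in R_{O'}$, and vice versa; $\sim_{AC}$ greatest. *)

(* Defs.v *)
From Stdlib Require Import List Relations ClassicalEpsilon.
Set Implicit Arguments.

Section CausalNets.

(* Event names E, action labels Act, places S, transitions T. *)
Variables (E Act S T : Type).

(* plab x = Some a  iff  x \in X_O and l_O(x) = a ;  ple is the order. *)
Record poset := Poset { plab : E -> option Act ; ple : E -> E -> Prop }.

Definition inX (O : poset) (x : E) : Prop := plab O x <> None.

Definition finite_pred {A : Type} (P : A -> Prop) : Prop :=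
  exists L : list A, forall x, P x -> In x L.

Definition is_poset (O : poset) : Prop :=
  finite_pred (inX O) /\
  (forall x y, ple O x y -> inX O x /\ inX O y) /\
  (forall x, inX O x -> ple O x x) /\
  (forall x y, ple O x y -> ple O y x -> x = y) /\
  (forall x y z, ple O x y -> ple O y z -> ple O x z).

Definition cset := E * Act -> Prop.
Definition carrier (O : poset) : cset := fun p => plab O (fst p) = Some (snd p).

(* Morphisms / isomorphisms of posets (functions E -> E, meaningful on X_O) *)
Definition morphism (O O' : poset) (f : E -> E) : Prop :=
  (forall x, inX O x -> plab O' (f x) = plab O x) /\
  (forall x y, ple O x y -> ple O' (f x) (f y)).

Definition iso (O O' : poset) (f : E -> E) : Prop :=
  morphism O O' f /\
  exists g : E -> E, morphism O' O g /\
    (forall x, inX O x -> g (f x) = x) /\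
    (forall y, inX O' y -> f (g y) = y).

Definition isomorphic (O O' : poset) : Prop := exists f, iso O O' f.

Definition maxO (O : poset) (K : cset) : cset :=
  fun p => K p /\ forall q, K q -> ple O (fst p) (fst q) -> fst q = fst p.

Definition down_closed (O : poset) (K : cset) : Prop :=
  forall y b x a, K (y, b) -> ple O x y -> plab O x = Some a -> K (x, a).

(* Causal markings: sets of pairs K |- s *)
Definition marking := cset -> S -> Prop.

Definition causes (c : marking) : cset := fun p => exists K s, c K s /\ K p.
Definition places (c : marking) : S -> Prop := fun s => exists K, c K s.
Definition mcup (c c' : marking) : marking := fun K s => c K s \/ c' K s.

Definition img (f : E -> E) (K : cset) : cset :=
  fun p => exists x, K (x, snd p) /\ fst p = f x.
Definition mimg (f : E -> E) (c : marking) : marking :=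
  fun K' s => exists K, c K s /\ K' = img f K.

Definition pmarking (O : poset) (c : marking) : Prop :=
  is_poset O /\
  finite_pred (fun p : cset * S => c (fst p) (snd p)) /\
  (forall K s, c K s -> (forall p, K p -> carrier O p) /\ down_closed O K).

Definition upd (e : E) (a : Act) (O : poset) : E -> option Act :=
  fun x => if excluded_middle_informative (x = e) then Some a else plab O x.

Definition delta (O : poset) (K : cset) (e : E) (a : Act) : poset :=
  let lab' := upd e a O in
  let base := fun x y => ple O x y \/ (y = e /\ exists b, K (x, b)) in
  Poset lab' (fun x y => lab' x <> None /\ lab' y <> None /\
                         clos_refl_trans E base x y).

(* The net N = (S, T, F, l): pre s t <-> (s,t) in F, post t s <-> (t,s) in F *)
Variables (pre : S -> T -> Prop) (post : T -> S -> Prop) (lab : T -> Act).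

Definition cstep (O : poset) (c0 : marking) (K : cset) (e : E) (a : Act)
                 (O' : poset) (c0' : marking) : Prop :=
  exists (t : T) (c c' : marking),
    c0 = mcup c c' /\
    pmarking O c0 /\
    (forall s, places c s <-> pre s t) /\
    a = lab t /\
    ~ inX O e /\
    K = maxO O (causes c) /\
    O' = delta O K e a /\
    c0' = mcup (fun K' s => K' = (fun p => causes c p \/ p = (e, a)) /\ post t s) c'.

Definition cbisim (R : poset -> poset * marking -> poset * marking -> Prop) : Prop :=
  forall O O1 c1 O2 c2, R O (O1, c1) (O2, c2) ->
    O1 = O /\ O2 = O /\ pmarking O c1 /\ pmarking O c2 /\
    (forall K e a O' c1', cstep O c1 K e a O' c1' ->
       exists c2', cstep O c2 K e a O' c2' /\ R O' (O', c1') (O', c2')) /\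
    (forall K e a O' c2', cstep O c2 K e a O' c2' ->
       exists c1', cstep O c1 K e a O' c1' /\ R O' (O', c1') (O', c2')).

Definition csim (O : poset) (c1 c2 : marking) : Prop :=
  exists R, cbisim R /\ R O (O, c1) (O, c2).

(* Canonical representatives [O] (canon O), isomorphisms alpha_O : O -> [O],
   and the choice fr O K a of the fresh event used to define delta(O,K,a). *)
Variables (canon : poset -> poset) (alpha : poset -> E -> E)
          (fr : poset -> cset -> Act -> E).

Definition abstract (O : poset) : Prop := canon O = O.
Definition abs_pmarking (O : poset) (c : marking) : Prop :=
  pmarking O c /\ abstract O.

Definition dabs (O : poset) (K : cset) (a : Act) : poset :=
  canon (delta O K (fr O K a) a).
Definition newev (O : poset) (K : cset) (a : Act) : E :=
  alpha (delta O K (fr O K a) a) (fr O K a).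
Definition oldf (O : poset) (K : cset) (a : Act) : E -> E :=
  alpha (delta O K (fr O K a) a).

Definition astep (O0 : poset) (d : marking) (K0 : cset) (a : Act)
                 (O1 : poset) (d1 : marking) : Prop :=
  exists (O : poset) (c : marking) (K : cset) (e : E) (O' : poset) (c' : marking),
    cstep O c K e a O' c' /\
    O0 = canon O /\
    d = mimg (alpha O) c /\
    K0 = img (alpha O) K /\
    O1 = dabs O0 K0 a /\
    d1 = mimg (fun x => if excluded_middle_informative (x = e)
                        then newev O0 K0 a
                        else oldf O0 K0 a (alpha O x)) c'.

Definition abisim (R : poset -> poset * marking -> poset * marking -> Prop) : Prop :=
  forall O O1 c1 O2 c2, R O (O1, c1) (O2, c2) ->
    O1 = O /\ O2 = O /\ abs_pmarking O c1 /\ abs_pmarking O c2 /\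
    (forall K a O' c1', astep O c1 K a O' c1' ->
       exists c2', astep O c2 K a O' c2' /\ R O' (O', c1') (O', c2')) /\
    (forall K a O' c2', astep O c2 K a O' c2' ->
       exists c1', astep O c1 K a O' c1' /\ R O' (O', c1') (O', c2')).

Definition asim (O : poset) (c1 c2 : marking) : Prop :=
  exists R, abisim R /\ R O (O, c1) (O, c2).

End CausalNets.

(* Main.v *)
Require Import Defs.
From Stdlib Require Import List Relations ClassicalEpsilon FunctionalExtensionality PropExtensionality.

Set Implicit Arguments.
Section Proofs.
Variables (E Act S T : Type).
Implicit Types (c : marking E Act S) (K : cset E Act) (O Q P A B C : poset E Act) (f g : E -> E) (x y : E).

Lemma cset_ext (K1 K2 : cset E Act) : (forall p, K1 p <-> K2 p) -> K1 = K2.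
Proof. intro H. apply functional_extensionality; intro p. apply propositional_extensionality. auto. Qed.

Lemma mark_ext (c1 c2 : marking E Act S) : (forall K s, c1 K s <-> c2 K s) -> c1 = c2.
Proof. intro H. apply functional_extensionality; intro K. apply functional_extensionality; intro s.
  apply propositional_extensionality. auto. Qed.

Definition evin (O : poset E Act) (c : marking E Act S) : Prop :=
  forall K s x b, c K s -> K (x, b) -> inX O x.
Definition kin (O : poset E Act) (K : cset E Act) : Prop :=
  forall x b, K (x, b) -> inX O x.

Lemma morph_inX O O' f x : morphism O O' f -> inX O x -> inX O' (f x).
Proof. intros [H1 _] Hx. unfold inX in *. rewrite H1; auto. Qed.

Lemma ple_inX O x y : is_poset O -> ple O x y -> inX O x /\ inX O y.
Proof. intros [_ [H _]]. apply H. Qed.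

Arguments ple_inX {O x y}.

Lemma iso_inv O O' f : iso O O' f -> exists g, iso O' O g /\
  (forall x, inX O x -> g (f x) = x) /\ (forall y, inX O' y -> f (g y) = y).
Proof. intros [Hm [g [Hg [H1 H2]]]]. exists g. split; [|auto].
  split; auto. exists f. auto. Qed.

Lemma iso_comp A B C f g : iso A B f -> iso B C g -> iso A C (fun x => g (f x)).
Proof.
  intros [[Hf1 Hf2] [fi [[Hfi1 Hfi2] [Hf3 Hf4]]]] [[Hg1 Hg2] [gi [[Hgi1 Hgi2] [Hg3 Hg4]]]].
  split; [split|].
  - intros x Hx. rewrite Hg1; auto. apply (morph_inX (conj Hf1 Hf2)); auto.
  - intros x y H; auto.
  - exists (fun y => fi (gi y)). split; [split|split].
    + intros y Hy. rewrite Hfi1. apply Hgi1; auto. apply (morph_inX (conj Hgi1 Hgi2)); auto.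
    + intros x y H; auto.
    + intros x Hx. rewrite Hg3. auto. apply (morph_inX (conj Hf1 Hf2)); auto.
    + intros y Hy. rewrite Hf4. auto. apply (morph_inX (conj Hgi1 Hgi2)); auto.
Qed.

Lemma iso_id O : iso O O (fun x => x).
Proof. split; [split; auto|]. exists (fun x => x). split; [split; auto| auto]. Qed.

Lemma img_comp f g (K : cset E Act) : img g (img f K) = img (fun x => g (f x)) K.
Proof. apply cset_ext; intros [u b]; unfold img; simpl; split.
  - intros [y [[x [Hx Hy]] Hu]]. simpl in *. exists x; split; auto. subst; auto.
  - intros [x [Hx Hu]]. exists (f x). split; auto. exists x; auto. Qed.

Lemma img_ext f g (K : cset E Act) : (forall x b, K (x, b) -> f x = g x) -> img f K = img g K.
Proof. intro H. apply cset_ext; intros [u b]; unfold img; simpl; split;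
  intros [x [Hx Hu]]; exists x; split; auto; rewrite Hu; [|symmetry]; eauto. Qed.

Lemma img_id (K : cset E Act) : img (fun x => x) K = K.
Proof. apply cset_ext; intros [u b]; unfold img; simpl; split.
  - intros [x [Hx Hu]]; subst; auto.
  - intros H; exists u; auto. Qed.

Lemma mimg_comp f g (c : marking E Act S) : mimg g (mimg f c) = mimg (fun x => g (f x)) c.
Proof. apply mark_ext; intros K s; unfold mimg; split.
  - intros [K1 [[K0 [H0 H1]] H2]]. exists K0; split; auto. subst. apply img_comp.
  - intros [K0 [H0 H1]]. exists (img f K0). split. exists K0; auto. subst; symmetry; apply img_comp. Qed.

Lemma mimg_ext f g (c : marking E Act S) : (forall K s x b, c K s -> K (x, b) -> f x = g x) ->
  mimg f c = mimg g c.
Proof. intro H. apply mark_ext; intros K s; unfold mimg; split;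
  intros [K0 [H0 H1]]; exists K0; split; auto; subst; [|symmetry]; apply img_ext; eauto. Qed.

Lemma mimg_id (c : marking E Act S) : mimg (fun x => x) c = c.
Proof. apply mark_ext; intros K s; unfold mimg; split.
  - intros [K0 [H0 H1]]. subst. rewrite img_id. auto.
  - intros H. exists K. rewrite img_id; auto. Qed.

Lemma pmarking_evin O c : pmarking O c -> evin O c.
Proof. intros [_ [_ H]] K s x b H1 H2. destruct (H K s H1) as [H3 _].
  specialize (H3 _ H2). unfold carrier in H3; simpl in H3. unfold inX; rewrite H3; discriminate. Qed.

Lemma mimg_back f g (c : marking E Act S) O : evin O c -> (forall x, inX O x -> g (f x) = x) ->
  mimg g (mimg f c) = c.
Proof. intros H1 H2. rewrite mimg_comp. rewrite <- (mimg_id c) at 2. apply mimg_ext. eauto. Qed.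

Lemma img_back f g (K : cset E Act) O : kin O K -> (forall x, inX O x -> g (f x) = x) ->
  img g (img f K) = K.
Proof. intros H1 H2. rewrite img_comp. rewrite <- (img_id K) at 2. apply img_ext. eauto. Qed.

Arguments mimg_back {f g c O}.
Arguments img_back {f g K O}.

Lemma pmarking_iso Q P f c : is_poset P -> iso Q P f -> pmarking Q c -> pmarking P (mimg f c).
Proof.
  intros HP Hiso [HQ [[L HL] Hc]].
  destruct (iso_inv Hiso) as [g [Hg [Hgf Hfg]]].
  destruct Hiso as [[Hf1 Hf2] _]. destruct Hg as [[Hg1 Hg2] _].
  split; [auto|split].
  - exists (map (fun p => (img f (fst p), snd p)) L). intros [K' s] [K [H1 H2]]. simpl in *.
    subst. apply (in_map (fun p => (img f (fst p), snd p)) L (K, s)). apply (HL (K, s)). auto.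
  - intros K' s [K [H1 H2]]. subst. destruct (Hc K s H1) as [Hcar Hdc]. split.
    + intros [u b] [x [Hx Hu]]. simpl in *. subst. unfold carrier in *. simpl.
      specialize (Hcar _ Hx). simpl in Hcar. rewrite Hf1; auto. unfold inX; rewrite Hcar; discriminate.
    + intros y b x a' [y0 [Hy0 Hy]] Hle Hlab. simpl in *. subst.
      assert (Hy0i : inX Q y0). { specialize (Hcar _ Hy0). unfold carrier in Hcar; simpl in Hcar.
        unfold inX; rewrite Hcar; discriminate. }
      assert (Hxi : inX P x). { unfold inX; rewrite Hlab; discriminate. }
      exists (g x). split; simpl; [|symmetry; auto].
      apply (Hdc y0 b). auto. rewrite <- (Hgf y0); auto. rewrite Hg1; auto.
Qed.

Lemma upd_eq O e a x : upd e a O x = if excluded_middle_informative (x = e) then Some a else plab O x.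
Proof. reflexivity. Qed.

Lemma inX_delta O K e a x : inX (delta O K e a) x <-> x = e \/ inX O x.
Proof. unfold inX, delta; simpl. rewrite upd_eq.
  destruct (excluded_middle_informative (x = e)); split; intros; try tauto; try discriminate.
  all: try (destruct H; [contradiction|auto]). Qed.

Lemma rt_char O K e x y : is_poset O -> ~ inX O e -> kin O K ->
  clos_refl_trans E (fun x y => ple O x y \/ (y = e /\ exists b, K (x, b))) x y ->
  x = y \/ ple O x y \/ (y = e /\ exists z b, K (z, b) /\ ple O x z).
Proof.
  intros HO He HK H. pose proof HO as [_ [_ [Hrefl [Hanti Htrans]]]].
  induction H as [x y [H|[H1 [b H2]]]| x | x y w _ IH1 _ IH2].
  - auto.
  - right; right. split; auto. exists x, b. split; auto. apply Hrefl. eapply HK; eauto.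
  - auto.
  - destruct IH1 as [<-|[H1|[-> [z [b [Hz Hxz]]]]]]; auto.
    + destruct IH2 as [<-|[H2|[-> [z [b [Hz Hyz]]]]]]; auto.
      * right; left. eapply Htrans; eauto.
      * right; right. split; auto. exists z, b. split; auto. eapply Htrans; eauto.
    + destruct IH2 as [<-|[H2|[-> H3]]].
      * right; right; split; [reflexivity|exists z, b; split; auto].
      * exfalso. apply He. apply (proj1 (@ple_inX O e w HO H2)).
      * right; right; split; [reflexivity|exists z, b; split; auto].
Qed.

Lemma delta_poset O K e a : is_poset O -> ~ inX O e -> kin O K -> is_poset (delta O K e a).
Proof.
  intros HO He HK.
  assert (Hple : forall x y, ple (delta O K e a) x y <-> inX (delta O K e a) x /\ inX (delta O K e a) y /\
     clos_refl_trans E (fun x y => ple O x y \/ (y = e /\ exists b, K (x, b))) x y).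
  { intros; apply iff_refl. }
  split; [|split; [|split; [|split]]].
  - destruct HO as [[L HL] _]. exists (e :: L). intros x Hx. apply inX_delta in Hx.
    destruct Hx as [->|Hx]; simpl; auto.
  - intros x y H. apply Hple in H. exact (conj (proj1 H) (proj1 (proj2 H))).
  - intros x Hx. apply Hple. split; auto. split; auto. apply rt_refl.
  - intros x y H1 H2. apply Hple in H1. apply Hple in H2.
    destruct H1 as [_ [_ H1]]. destruct H2 as [_ [_ H2]].
    apply rt_char in H1; auto. apply rt_char in H2; auto.
    destruct H1 as [H1|[H1|[H1 _]]]; auto;
    destruct H2 as [H2|[H2|[H2 _]]]; auto.
    + eapply (proj1 (proj2 (proj2 (proj2 HO)))); eauto.
    + subst. exfalso; apply He; first [exact (proj1 (ple_inX HO H1)) | exact (proj1 (ple_inX HO H2)) | exact (proj2 (ple_inX HO H1)) | exact (proj2 (ple_inX HO H2))].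
    + subst. exfalso; apply He; first [exact (proj1 (ple_inX HO H1)) | exact (proj1 (ple_inX HO H2)) | exact (proj2 (ple_inX HO H1)) | exact (proj2 (ple_inX HO H2))].
    + congruence.
  - intros x y w H1 H2. apply Hple in H1. apply Hple in H2. apply Hple.
    split; [exact (proj1 H1)|split; [exact (proj1 (proj2 H2))|]]. eapply rt_trans; [apply (proj2 (proj2 H1))|apply (proj2 (proj2 H2))].
Qed.

Lemma delta_morph O1 O2 h K1 K2 e1 e2 a : is_poset O1 -> is_poset O2 -> morphism O1 O2 h ->
  ~ inX O1 e1 -> ~ inX O2 e2 -> (forall z b, K1 (z, b) -> inX O1 z /\ K2 (h z, b)) ->
  morphism (delta O1 K1 e1 a) (delta O2 K2 e2 a)
    (fun x => if excluded_middle_informative (x = e1) then e2 else h x).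
Proof.
  intros HO1 HO2 [Hh1 Hh2] He1 He2 HK.
  assert (Hlab : forall x, inX (delta O1 K1 e1 a) x ->
    plab (delta O2 K2 e2 a) (if excluded_middle_informative (x = e1) then e2 else h x) =
    plab (delta O1 K1 e1 a) x).
  { intros x Hx. unfold delta; simpl. rewrite !upd_eq.
    destruct (excluded_middle_informative (x = e1)) as [Hxe|Hxe].
    - destruct (excluded_middle_informative (e2 = e2)); [auto|congruence].
    - apply inX_delta in Hx. destruct Hx as [Hx|Hx]; [contradiction|].
      destruct (excluded_middle_informative (h x = e2)) as [Hh|Hh].
      + exfalso. apply He2. rewrite <- Hh. apply (morph_inX (conj Hh1 Hh2)); auto.
      + auto. }
  split; auto.
  intros x y H. unfold delta in H; simpl in H. destruct H as [Hx [Hy H]].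
  unfold delta; simpl. split; [|split].
  - change (inX (delta O2 K2 e2 a) (if excluded_middle_informative (x = e1) then e2 else h x)).
    unfold inX. rewrite Hlab; auto.
  - change (inX (delta O2 K2 e2 a) (if excluded_middle_informative (y = e1) then e2 else h y)).
    unfold inX. rewrite Hlab; auto.
  - clear Hx Hy. induction H as [x y [H|[H1 [b H2]]]| x | x y w _ IH1 _ IH2].
    + apply rt_step. left. destruct (ple_inX HO1 H) as [Hx Hy].
      destruct (excluded_middle_informative (x = e1)); [subst; contradiction|].
      destruct (excluded_middle_informative (y = e1)); [subst; contradiction|]. auto.
    + apply rt_step. right. destruct (HK _ _ H2) as [Hx Hk].
      destruct (excluded_middle_informative (x = e1)); [subst; contradiction|].
      destruct (excluded_middle_informative (y = e1)); [|contradiction].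
      split; eauto.
    + apply rt_refl.
    + eapply rt_trans; eauto.
Qed.

Lemma delta_iso Q P f K e e2 a : is_poset Q -> is_poset P -> iso Q P f ->
  ~ inX Q e -> ~ inX P e2 -> kin Q K ->
  iso (delta Q K e a) (delta P (img f K) e2 a)
    (fun x => if excluded_middle_informative (x = e) then e2 else f x).
Proof.
  intros HQ HP Hiso He He2 HK.
  destruct (iso_inv Hiso) as [g [Hg [Hgf Hfg]]].
  split.
  - apply delta_morph; auto. apply Hiso.
    intros z b Hz. split. eapply HK; eauto. exists z; auto.
  - exists (fun x => if excluded_middle_informative (x = e2) then e else g x).
    split; [|split].
    + apply delta_morph; auto. apply Hg.
      intros z b [x [Hx Hz]]. simpl in *. subst. split.
      * apply (morph_inX (proj1 Hiso)). eapply HK; eauto.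
      * rewrite Hgf; eauto.
    + intros x Hx. apply inX_delta in Hx.
      destruct (excluded_middle_informative (x = e)) as [->|Hxe].
      * destruct (excluded_middle_informative (e2 = e2)); congruence.
      * destruct Hx as [Hx|Hx]; [contradiction|].
        destruct (excluded_middle_informative (f x = e2)) as [Hh|Hh].
        -- exfalso. apply He2. rewrite <- Hh. apply (morph_inX (proj1 Hiso)); auto.
        -- auto.
    + intros x Hx. apply inX_delta in Hx.
      destruct (excluded_middle_informative (x = e2)) as [->|Hxe].
      * destruct (excluded_middle_informative (e = e)); congruence.
      * destruct Hx as [Hx|Hx]; [contradiction|].
        destruct (excluded_middle_informative (g x = e)) as [Hh|Hh].
        -- exfalso. apply He. rewrite <- Hh. apply (morph_inX (proj1 Hg)); auto.
        -- auto.
Qed.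

Lemma causes_mimg f c : causes (mimg f c) = img f (causes c).
Proof. apply cset_ext; intros [u b]; unfold causes, mimg, img; simpl; split.
  - intros [K' [s [[K [H1 H2]] H3]]]. subst. destruct H3 as [x [H3 H4]]. simpl in *.
    exists x. split; eauto.
  - intros [x [[K [s [H1 H2]]] H3]]. exists (img f K), s. split; eauto. exists x; auto. Qed.

Lemma maxO_img Q P f M : is_poset Q -> iso Q P f -> kin Q M -> img f (maxO Q M) = maxO P (img f M).
Proof.
  intros HQ Hiso HM. destruct (iso_inv Hiso) as [g [Hg [Hgf Hfg]]].
  destruct Hiso as [[Hf1 Hf2] _]. destruct Hg as [[Hg1 Hg2] _].
  apply cset_ext; intros [u b]; unfold maxO, img; simpl; split.
  - intros [x [[Hx Hmax] Hu]]. subst. split. exists x; auto.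
    intros [v b'] [y [Hy Hv]] Hle. simpl in *. subst.
    assert (y = x). { apply (Hmax (y, b')); auto. simpl.
      rewrite <- (Hgf x), <- (Hgf y); eauto. }
    subst; auto.
  - intros [[x [Hx Hu]] Hmax]. simpl in *. subst. exists x. split; auto. split; auto.
    intros [y b'] Hy Hle. simpl in *.
    assert (f y = f x). { apply (Hmax (f y, b')). exists y; auto. simpl. auto. }
    rewrite <- (Hgf x), <- (Hgf y); eauto. congruence.
Qed.

Variables (pre : S -> T -> Prop) (post : T -> S -> Prop) (lab : T -> Act).

Lemma cstep_basic O c0 K e a O' c0' : cstep pre post lab O c0 K e a O' c0' ->
  pmarking O c0 /\ ~ inX O e /\ kin O K /\ O' = delta O K e a /\
  (forall K' s x b, c0' K' s -> K' (x, b) -> x = e \/ inX O x).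
Proof.
  intros [t [c [c' [Hc0 [Hpm [Hpl [Ha [He [HK [HO' Hc0']]]]]]]]]].
  pose proof (pmarking_evin Hpm) as Hev.
  assert (Hcc : forall K s, c K s -> c0 K s). { intros; subst; left; auto. }
  assert (Hcc' : forall K s, c' K s -> c0 K s). { intros; subst; right; auto. }
  split; [auto|split; [auto|split; [|split; [auto|]]]].
  - intros x b Hx. subst K. destruct Hx as [[K [s [H1 H2]]] _]. eapply Hev; eauto.
  - intros K' s x b H1 H2. subst c0'. destruct H1 as [[-> _]|H1].
    + destruct H2 as [[K1 [s1 [H3 H4]]]|H2]. right; eauto. left; congruence.
    + right; eauto.
Qed.

Lemma cstep_iso Q P f c0 K e a Q' c0' e2 : is_poset P -> iso Q P f ->
  cstep pre post lab Q c0 K e a Q' c0' -> ~ inX P e2 ->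
  cstep pre post lab P (mimg f c0) (img f K) e2 a (delta P (img f K) e2 a)
    (mimg (fun x => if excluded_middle_informative (x = e) then e2 else f x) c0') /\
  iso Q' (delta P (img f K) e2 a) (fun x => if excluded_middle_informative (x = e) then e2 else f x).
Proof.
  intros HP Hiso Hst He2.
  destruct (cstep_basic Hst) as [Hpm [He [HK [HQ' Hev']]]].
  assert (HQ : is_poset Q) by apply Hpm.
  pose proof (pmarking_evin Hpm) as Hev.
  split; [|subst Q'; apply delta_iso; auto].
  set (F := fun x => if excluded_middle_informative (x = e) then e2 else f x).
  assert (HFf : forall x, inX Q x -> F x = f x).
  { intros x Hx. unfold F. destruct (excluded_middle_informative (x = e)); [subst; contradiction|auto]. }
  destruct Hst as [t [c [c' [Hc0 [_ [Hpl [Ha [_ [HKd [_ Hc0']]]]]]]]]].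
  assert (Hcc : forall K s, c K s -> c0 K s). { intros; subst; left; auto. }
  assert (Hcc' : forall K s, c' K s -> c0 K s). { intros; subst; right; auto. }
  exists t, (mimg f c), (mimg f c'). split; [|split; [|split; [|split; [|split; [|split; [|split]]]]]].
  - subst c0. apply mark_ext; intros K1 s; unfold mimg, mcup; split.
    + intros [K2 [[H|H] H']]; [left|right]; eauto.
    + intros [[K2 [H H']]|[K2 [H H']]]; eauto.
  - exact (pmarking_iso HP Hiso Hpm).
  - intro s. rewrite <- Hpl. unfold places, mimg. split.
    + intros [K1 [K2 [H _]]]; eauto.
    + intros [K1 H]. exists (img f K1), K1; auto.
  - auto.
  - auto.
  - subst K. rewrite causes_mimg. apply maxO_img; auto.
    intros x b [K1 [s [H1 H2]]]. eapply Hev; eauto.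
  - reflexivity.
  - assert (HN : img F (fun p => causes c p \/ p = (e, a)) =
                 (fun p => causes (mimg f c) p \/ p = (e2, a))).
    { rewrite causes_mimg. apply cset_ext; intros [u b]; unfold img; simpl; split.
      - intros [x [[H|H] Hu]].
        + left. exists x. split; auto. rewrite Hu. apply HFf.
          destruct H as [K1 [s [H1 H2]]]. eapply Hev; eauto.
        + injection H; intros; subst. right. unfold F.
          destruct (excluded_middle_informative (e = e)); [auto|congruence].
      - intros [[x [H Hu]]|H].
        + exists x. split; auto. rewrite Hu. symmetry. apply HFf.
          destruct H as [K1 [s [H1 H2]]]. eapply Hev; eauto.
        + injection H; intros; subst. exists e. split; auto. unfold F.
          destruct (excluded_middle_informative (e = e)); [auto|congruence]. }
    subst c0'. apply mark_ext; intros K1 s; unfold mimg, mcup; split.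
    + intros [K2 [[[-> Hp]|H] ->]].
      * left. split; auto.
      * right. exists K2. split; auto. apply img_ext. intros x b Hx. apply HFf. eapply Hev; eauto.
    + intros [[-> Hp]|[K2 [H ->]]].
      * exists (fun p => causes c p \/ p = (e, a)). split; auto.
      * exists K2. split; auto. symmetry. apply img_ext. intros x b Hx. apply HFf. eapply Hev; eauto.
Qed.

Lemma csim_sym O c1 c2 : csim pre post lab O c1 c2 -> csim pre post lab O c2 c1.
Proof.
  intros [R [HR H]]. exists (fun X p q => R X q p). split; auto.
  intros X O1 d1 O2 d2 H1. destruct (HR _ _ _ _ _ H1) as [-> [-> [H2 [H3 [H4 H5]]]]].
  split; [auto|split; [auto|split; [auto|split; [auto|split]]]]; [exact H5|exact H4].
Qed.

Lemma csim_pm O c1 c2 : csim pre post lab O c1 c2 -> pmarking O c1 /\ pmarking O c2.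
Proof. intros [R [HR H]]. destruct (HR _ _ _ _ _ H) as [_ [_ [H1 [H2 _]]]]. auto. Qed.

Hypothesis HEinf : forall L : list E, exists e : E, ~ In e L.

Lemma fresh O : is_poset O -> exists e, ~ inX O e.
Proof. intros [[L HL] _]. destruct (HEinf L) as [e He]. exists e. intro H; apply He; auto. Qed.

Lemma transfer_step X Y h b1 b2 K e a X' d1' : is_poset X -> is_poset Y -> iso Y X h ->
  csim pre post lab Y b1 b2 -> cstep pre post lab X (mimg h b1) K e a X' d1' ->
  exists d2', cstep pre post lab X (mimg h b2) K e a X' d2' /\
  exists Y' h' b1' b2', is_poset Y' /\ iso Y' X' h' /\ csim pre post lab Y' b1' b2' /\
     d1' = mimg h' b1' /\ d2' = mimg h' b2'.
Proof.
  intros HX HY Hiso Hcs Hst.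
  destruct (iso_inv Hiso) as [k [Hk [Hkh Hhk]]].
  destruct (cstep_basic Hst) as [Hpm [He [HK [HX' Hev']]]].
  destruct (fresh HY) as [e' He'].
  destruct (cstep_iso HY Hk Hst He') as [Hst1 Hiso1].
  destruct (csim_pm Hcs) as [Hp1 Hp2].
  rewrite (mimg_back (pmarking_evin Hp1) Hkh) in Hst1.
  destruct Hcs as [R [HR HRb]].
  destruct (HR _ _ _ _ _ HRb) as [_ [_ [_ [_ [Hfw _]]]]].
  destruct (Hfw _ _ _ _ _ Hst1) as [c2' [Hst2 HR2]].
  destruct (cstep_iso HX Hiso Hst2 He) as [Hst3 Hiso3].
  rewrite (img_back HK Hhk) in Hst3, Hiso3. rewrite <- HX' in Hst3, Hiso3.
  eexists. split; [exact Hst3|].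
  do 4 eexists. split; [|split; [exact Hiso3|split; [exists R; split; eauto|split; [|reflexivity]]]].
  - destruct (HR _ _ _ _ _ HR2) as [_ [_ [H _]]]. apply H.
  - symmetry. apply (@mimg_back _ _ _ X').
    + intros K1 s x b H1 H2. destruct (Hev' _ _ _ _ H1 H2) as [Hx|Hx]; rewrite HX'; apply inX_delta; auto.
    + intros x Hx. rewrite HX' in Hx. apply inX_delta in Hx.
      destruct (excluded_middle_informative (x = e)) as [->|Hxe].
      * destruct (excluded_middle_informative (e' = e')); congruence.
      * destruct Hx as [Hx|Hx]; [contradiction|].
        destruct (excluded_middle_informative (k x = e')) as [Hh|Hh].
        -- exfalso. apply He'. rewrite <- Hh. apply (morph_inX (proj1 Hk)); auto.
        -- auto.
Qed.

Lemma csim_iso Q P f c1 c2 : is_poset Q -> is_poset P -> iso Q P f ->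
  csim pre post lab Q c1 c2 -> csim pre post lab P (mimg f c1) (mimg f c2).
Proof.
  intros HQ HP Hiso Hcs.
  exists (fun X p q => fst p = X /\ fst q = X /\ exists Y h b1 b2, is_poset X /\ is_poset Y /\
     iso Y X h /\ csim pre post lab Y b1 b2 /\ snd p = mimg h b1 /\ snd q = mimg h b2).
  split.
  - intros X O1 d1 O2 d2 [H1 [H2 [Y [h [b1 [b2 [HX [HY [Hh [Hc [Hd1 Hd2]]]]]]]]]]].
    simpl in *. subst. destruct (csim_pm Hc) as [Hp1 Hp2].
    split; [auto|split; [auto|split; [|split; [|split]]]].
    + apply (pmarking_iso HX Hh Hp1).
    + apply (pmarking_iso HX Hh Hp2).
    + intros K e a X' d1' Hst.
      destruct (transfer_step HX HY Hh Hc Hst) as [d2' [Hst2 [Y' [h' [b1' [b2' [HY' [Hh' [Hc' [E1 E2]]]]]]]]]].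
      exists d2'. split; auto. simpl. split; auto. split; auto.
      exists Y', h', b1', b2'. split; [|split; [auto|split; [auto|split; [auto|split; auto]]]].
      destruct (cstep_basic Hst) as [_ [He [HK [-> _]]]]. apply delta_poset; auto.
    + intros K e a X' d2' Hst.
      destruct (transfer_step HX HY Hh (csim_sym Hc) Hst) as [d1' [Hst2 [Y' [h' [b2' [b1' [HY' [Hh' [Hc' [E1 E2]]]]]]]]]].
      exists d1'. split; auto. simpl. split; auto. split; auto.
      exists Y', h', b1', b2'. split; [|split; [auto|split; [auto|split; [apply csim_sym; auto|split; auto]]]].
      destruct (cstep_basic Hst) as [_ [He [HK [-> _]]]]. apply delta_poset; auto.
  - simpl. split; auto. split; auto. exists Q, f, c1, c2. split; [auto|split; [auto|split; [auto|split; [auto|split; auto]]]].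
Qed.

Lemma evin_target O c0 K e a O' c0' : cstep pre post lab O c0 K e a O' c0' -> evin O' c0'.
Proof. intro Hst. destruct (cstep_basic Hst) as [_ [_ [_ [-> Hev]]]].
  intros K1 s x b H1 H2. apply inX_delta. eapply Hev; eauto. Qed.

Lemma pm_back A B F c : is_poset A -> iso A B F -> pmarking B (mimg F c) -> evin A c -> pmarking A c.
Proof. intros HA Hiso Hpm Hev. destruct (iso_inv Hiso) as [G [HG [HGF _]]].
  rewrite <- (mimg_back Hev HGF). apply (pmarking_iso HA HG Hpm). Qed.

Variables (canon : poset E Act -> poset E Act) (alpha : poset E Act -> E -> E)
  (fr : poset E Act -> cset E Act -> Act -> E).
Hypothesis Hcanon : forall O, is_poset O -> is_poset (canon O) /\ iso O (canon O) (alpha O).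
Hypothesis Hclass : forall O O', is_poset O -> is_poset O' -> isomorphic O O' -> canon O = canon O'.
Hypothesis Hfr : forall O K a, is_poset O -> ~ inX O (fr O K a).

Lemma asim_sym O c1 c2 : asim pre post lab canon alpha fr O c1 c2 -> asim pre post lab canon alpha fr O c2 c1.
Proof.
  intros [R [HR H]]. exists (fun X p q => R X q p). split; auto.
  intros X O1 d1 O2 d2 H1. destruct (HR _ _ _ _ _ H1) as [-> [-> [H2 [H3 [H4 H5]]]]].
  split; [auto|split; [auto|split; [auto|split; [auto|split]]]]; [exact H5|exact H4].
Qed.

Lemma canon_idem X : is_poset X -> canon (canon X) = canon X.
Proof. intro HX. destruct (Hcanon HX) as [H1 H2]. symmetry. apply Hclass; auto. exists (alpha X); auto. Qed.

Lemma abs_fw O d1 d2 K0 a O1 d1' : canon O = O -> csim pre post lab O d1 d2 ->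
  astep pre post lab canon alpha fr O d1 K0 a O1 d1' ->
  exists d2', astep pre post lab canon alpha fr O d2 K0 a O1 d2' /\ canon O1 = O1 /\
     csim pre post lab O1 d1' d2'.
Proof.
  intros Hab Hcs [Q [c [K [e [Q' [c' [Hst [HO0 [Hd [HK0 [HO1 Hd1']]]]]]]]]]].
  destruct (cstep_basic Hst) as [Hpm [He [HK [HQ' Hev']]]].
  assert (HQ : is_poset Q) by apply Hpm.
  destruct (Hcanon HQ) as [HcQ HaQ].
  subst O. destruct (iso_inv HaQ) as [g [Hg [Hga Hag]]].
  pose proof (csim_iso HcQ HQ Hg Hcs) as Hcs2.
  destruct (csim_pm Hcs) as [Hp1 Hp2].
  rewrite Hd in Hcs2. rewrite (mimg_back (pmarking_evin Hpm) Hga) in Hcs2.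
  destruct Hcs2 as [R [HR HRb]].
  destruct (HR _ _ _ _ _ HRb) as [_ [_ [_ [_ [Hfw _]]]]].
  destruct (Hfw _ _ _ _ _ Hst) as [c2' [Hst2 HR2]].
  set (e0 := fr (canon Q) K0 a).
  set (Xd := delta (canon Q) K0 e0 a).
  assert (He0 : ~ inX (canon Q) e0) by (apply Hfr; auto).
  assert (HKc : kin (canon Q) K0).
  { subst K0. intros x b [z [Hz Hx]]. simpl in *. subst. apply (morph_inX (proj1 HaQ)). eapply HK; eauto. }
  assert (HXd : is_poset Xd) by (apply delta_poset; auto).
  destruct (Hcanon HXd) as [HcXd HaXd].
  assert (HO1e : O1 = canon Xd) by (subst O1; reflexivity).
  eexists. split; [|split].
  - exists Q, (mimg g d2), K, e, Q', c2'. split; [exact Hst2|split; [reflexivity|split; [|split; [exact HK0|split; [exact HO1|reflexivity]]]]].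
    symmetry. apply (mimg_back (pmarking_evin Hp2) Hag).
  - rewrite HO1e. apply canon_idem; auto.
  - subst d1'. apply (csim_iso (Q := Q')).
    + destruct (HR _ _ _ _ _ HR2) as [_ [_ [H _]]]. apply H.
    + rewrite HO1e; auto.
    + destruct (cstep_iso HcQ HaQ Hst He0) as [_ Hiso1].
      rewrite <- HK0 in Hiso1. fold Xd in Hiso1.
      pose proof (iso_comp Hiso1 HaXd) as Hiso2. rewrite HO1e.
      replace (fun x => if excluded_middle_informative (x = e) then newev alpha fr (canon Q) K0 a
                       else oldf alpha fr (canon Q) K0 a (alpha Q x))
        with (fun x => alpha Xd (if excluded_middle_informative (x = e) then e0 else alpha Q x)).
      * exact Hiso2.
      * apply functional_extensionality; intro x. destruct (excluded_middle_informative (x = e)); reflexivity.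
    + exists R. split; auto.
Qed.

Lemma conc_fw P f c1 c2 K e a P' c1' : is_poset P -> iso P (canon P) f ->
  pmarking P c1 -> pmarking P c2 ->
  asim pre post lab canon alpha fr (canon P) (mimg f c1) (mimg f c2) ->
  cstep pre post lab P c1 K e a P' c1' ->
  exists c2', cstep pre post lab P c2 K e a P' c2' /\ is_poset P' /\
    pmarking P' c1' /\ pmarking P' c2' /\
    exists f', iso P' (canon P') f' /\
      asim pre post lab canon alpha fr (canon P') (mimg f' c1') (mimg f' c2').
Proof.
  intros HP Hf Hp1 Hp2 [RA [HRA HRAb]] Hst.
  destruct (cstep_basic Hst) as [_ [He [HK [HP' Hev']]]].
  destruct (Hcanon HP) as [HcP HaP].
  destruct (iso_inv HaP) as [ai [Hai [Haia Haai]]].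
  destruct (iso_inv Hf) as [fi [Hfi [Hfif Hffi]]].
  pose proof (iso_comp Hf Hai) as Hh.
  set (h := fun x => ai (f x)) in Hh.
  destruct (cstep_iso HP Hh Hst He) as [Hst1 Hiso1].
  set (K0 := img (alpha P) (img h K)).
  set (e0 := fr (canon P) K0 a).
  set (Xd := delta (canon P) K0 e0 a).
  assert (He0 : ~ inX (canon P) e0) by (apply Hfr; auto).
  assert (HKc : kin (canon P) K0).
  { intros x b [z [[y [Hy Hz]] Hx]]. simpl in *. subst.
    apply (morph_inX (proj1 HaP)). apply (morph_inX (proj1 Hh)). eapply HK; eauto. }
  assert (HXd : is_poset Xd) by (apply delta_poset; auto).
  destruct (Hcanon HXd) as [HcXd HaXd].
  assert (Hfc1 : mimg f c1 = mimg (alpha P) (mimg h c1)).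
  { rewrite mimg_comp. apply mimg_ext. intros K1 s x b H1 H2. unfold h.
    rewrite Haai; auto. apply (morph_inX (proj1 Hf)). eapply (pmarking_evin Hp1); eauto. }
  set (rho := fun x => if excluded_middle_informative (x = e) then newev alpha fr (canon P) K0 a
                       else oldf alpha fr (canon P) K0 a (alpha P x)).
  assert (Hast : astep pre post lab canon alpha fr (canon P) (mimg f c1) K0 a (canon Xd)
      (mimg rho (mimg (fun x => if excluded_middle_informative (x = e) then e else h x) c1'))).
  { exists P, (mimg h c1), (img h K), e, (delta P (img h K) e a),
      (mimg (fun x => if excluded_middle_informative (x = e) then e else h x) c1').
    split; [exact Hst1|split; [reflexivity|split; [exact Hfc1|split; [reflexivity|split; reflexivity]]]]. }
  destruct (HRA _ _ _ _ _ HRAb) as [_ [_ [_ [_ [Hfw _]]]]].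
  destruct (Hfw _ _ _ _ Hast) as [d2' [Hast2 HR2]].
  destruct (HRA _ _ _ _ _ HR2) as [_ [_ [[Hpd1 HabO1] [[Hpd2 _] _]]]].
  destruct Hast2 as [Q2 [cq2 [K2 [e2 [Q2' [cq2' [Hst2 [HC [Hd2 [HK2 [_ Hd2']]]]]]]]]]].
  destruct (cstep_basic Hst2) as [Hpq [He2 [HKq [HQ2' Hevq]]]].
  assert (HQ2 : is_poset Q2) by apply Hpq.
  destruct (Hcanon HQ2) as [_ Ha2]. rewrite <- HC in Ha2.
  pose proof (iso_comp Ha2 Hfi) as Hk.
  destruct (cstep_iso HP Hk Hst2 He) as [Hst3 Hiso3].
  assert (Ec2 : mimg (fun x => fi (alpha Q2 x)) cq2 = c2).
  { rewrite <- mimg_comp. rewrite <- Hd2. apply (mimg_back (pmarking_evin Hp2) Hfif). }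
  assert (EK : img (fun x => fi (alpha Q2 x)) K2 = K).
  { rewrite <- img_comp. rewrite <- HK2. unfold K0. rewrite (img_comp h (alpha P) K).
    rewrite (@img_ext _ f K).
    - apply (img_back HK Hfif).
    - intros x b Hx. unfold h. apply Haai. apply (morph_inX (proj1 Hf)). eapply HK; eauto. }
  rewrite Ec2, EK, <- HP' in Hst3. rewrite EK, <- HP' in Hiso3.
  assert (HP'p : is_poset P') by (rewrite HP'; apply delta_poset; auto).
  destruct (cstep_iso HcP HaP Hst1 He0) as [_ Hiso4]. fold K0 e0 Xd in Hiso4.
  pose proof (iso_comp (iso_comp Hiso1 Hiso4) HaXd) as HF.
  set (F := fun x => rho (if excluded_middle_informative (x = e) then e else h x)).
  assert (EF : (fun x => alpha Xd ((fun x0 => if excluded_middle_informative (x0 = e) then e0 else alpha P x0)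
      ((fun x0 => if excluded_middle_informative (x0 = e) then e else h x0) x))) = F).
  { apply functional_extensionality; intro x. unfold F, rho. cbv beta.
    generalize (if excluded_middle_informative (x = e) then e else h x). intro y.
    destruct (excluded_middle_informative (y = e)); reflexivity. }
  assert (HF' : iso P' (canon Xd) F) by (rewrite <- EF; exact HF). clear HF; rename HF' into HF.
  assert (Ed1 : mimg rho (mimg (fun x => if excluded_middle_informative (x = e) then e else h x) c1') = mimg F c1')
    by (rewrite mimg_comp; reflexivity).
  rewrite Ed1 in Hpd1, HR2.
  assert (Ed2 : d2' = mimg F (mimg (fun x => if excluded_middle_informative (x = e2) then e else fi (alpha Q2 x)) cq2')).
  { rewrite Hd2', mimg_comp. apply mimg_ext. intros K1 s x b H1 H2.
    unfold F, rho. destruct (Hevq _ _ _ _ H1 H2) as [Hx|Hx].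
    - subst x. destruct (excluded_middle_informative (e2 = e2)); [|congruence]. cbv beta iota.
      destruct (excluded_middle_informative (e = e)); [|congruence]. cbv beta iota.
      destruct (excluded_middle_informative (e = e)); [|congruence]. reflexivity.
    - destruct (excluded_middle_informative (x = e2)) as [Hxe|Hxe]; cbv beta iota.
      + subst x. destruct (excluded_middle_informative (e = e)); [|congruence]. cbv beta iota.
        destruct (excluded_middle_informative (e = e)); [|congruence]. reflexivity.
      + assert (Hy : inX (canon P) (alpha Q2 x)) by (apply (morph_inX (proj1 Ha2)); auto).
        assert (Hz : inX P (fi (alpha Q2 x))) by (apply (morph_inX (proj1 Hfi)); auto).
        destruct (excluded_middle_informative (fi (alpha Q2 x) = e)) as [Hze|Hze]; [subst; contradiction|].
        unfold h. rewrite Hffi; auto.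
        assert (Hw : inX P (ai (alpha Q2 x))) by (apply (morph_inX (proj1 Hai)); auto).
        destruct (excluded_middle_informative (ai (alpha Q2 x) = e)) as [Hwe|Hwe]; [subst; contradiction|].
        rewrite Haai; auto. }
  rewrite Ed2 in Hpd2, HR2.
  eexists. split; [exact Hst3|split; [exact HP'p|split; [|split]]].
  - apply (pm_back HP'p HF Hpd1). apply (evin_target Hst).
  - apply (pm_back HP'p HF Hpd2). apply (evin_target Hst3).
  - assert (HcO1 : canon P' = canon Xd).
    { transitivity (canon (canon Xd)). apply Hclass; auto. exists F; auto. auto. }
    exists F. rewrite HcO1. split; auto. exists RA. split; auto.
Qed.

Lemma csim_to_asim O c1 c2 : canon O = O -> csim pre post lab O c1 c2 ->
  asim pre post lab canon alpha fr O c1 c2.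
Proof.
  intros Hab Hcs.
  exists (fun X p q => fst p = X /\ fst q = X /\ canon X = X /\ csim pre post lab X (snd p) (snd q)).
  split.
  - intros X O1 d1 O2 d2 [H1 [H2 [HX Hc]]]. simpl in *. subst.
    destruct (csim_pm Hc) as [Hp1 Hp2].
    split; [auto|split; [auto|split; [split; auto|split; [split; auto|split]]]].
    + intros K a O' d1' Hst. destruct (abs_fw HX Hc Hst) as [d2' [Hst2 [HO' Hc']]].
      exists d2'. split; auto; simpl; auto.
    + intros K a O' d2' Hst. destruct (abs_fw HX (csim_sym Hc) Hst) as [d1' [Hst2 [HO' Hc']]].
      exists d1'. split; auto; simpl; split; auto; split; auto; split; auto; apply csim_sym; auto.
  - simpl. auto.
Qed.

Lemma asim_to_csim O c1 c2 : abs_pmarking canon O c1 -> abs_pmarking canon O c2 ->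
  asim pre post lab canon alpha fr O c1 c2 -> csim pre post lab O c1 c2.
Proof.
  intros [Hp1 Hab] [Hp2 _] Has.
  exists (fun X p q => fst p = X /\ fst q = X /\ is_poset X /\ pmarking X (snd p) /\ pmarking X (snd q) /\
     exists f, iso X (canon X) f /\ asim pre post lab canon alpha fr (canon X) (mimg f (snd p)) (mimg f (snd q))).
  split.
  - intros X O1 d1 O2 d2 [H1 [H2 [HX [Hq1 [Hq2 [f [Hf Ha]]]]]]]. simpl in *. subst.
    split; [auto|split; [auto|split; [auto|split; [auto|split]]]].
    + intros K e a X' d1' Hst.
      destruct (conc_fw HX Hf Hq1 Hq2 Ha Hst) as [d2' [Hst2 [HX' [Hr1 [Hr2 Hr]]]]].
      exists d2'. split; [auto|]. simpl. split; [auto|split; [auto|split; [auto|split; [auto|split; [auto|exact Hr]]]]].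
    + intros K e a X' d2' Hst.
      destruct (conc_fw HX Hf Hq2 Hq1 (asim_sym Ha) Hst) as [d1' [Hst2 [HX' [Hr2 [Hr1 [f' [Hf' Ha']]]]]]].
      exists d1'. split; [auto|]. simpl. split; [auto|split; [auto|split; [auto|split; [auto|split; [auto|]]]]].
      exists f'. split; auto. apply asim_sym; auto.
  - simpl. split; auto. split; auto. split; [apply Hp1|]. split; auto. split; auto.
    exists (fun x => x). rewrite !mimg_id. unfold abstract in Hab. rewrite Hab. split; auto. apply iso_id.
Qed.
End Proofs.

Theorem lemma7
  (E Act S T : Type)
  (HEinf : forall L : list E, exists e : E, ~ In e L)
  (pre : S -> T -> Prop) (post : T -> S -> Prop) (lab : T -> Act)
  (Hpre : forall t, (exists s, pre s t) /\ finite_pred (fun s => pre s t))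
  (Hpost : forall t, (exists s, post t s) /\ finite_pred (fun s => post t s))
  (canon : poset E Act -> poset E Act) (alpha : poset E Act -> E -> E)
  (Hcanon : forall O, is_poset O -> is_poset (canon O) /\ iso O (canon O) (alpha O))
  (Hclass : forall O O', is_poset O -> is_poset O' -> isomorphic O O' ->
                         canon O = canon O')
  (fr : poset E Act -> cset E Act -> Act -> E)
  (Hfr : forall O K a, is_poset O -> ~ inX O (fr O K a))
  (O : poset E Act) (c1 c2 : marking E Act S) :
  abs_pmarking canon O c1 -> abs_pmarking canon O c2 ->
  (csim pre post lab O c1 c2 <-> asim pre post lab canon alpha fr O c1 c2).
Proof.
  intros H1 H2. split.
  - intro Hc. eapply csim_to_asim; eauto. apply H1.
  - intro Ha. eapply asim_to_csim; eauto.
Qed.
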